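(* Let $N_n$ be a noisy discrete memoryless classical channel whose confusability graph $G(N_n)$, with $n$ vertices, is isomorphic to an exclusivity graph $\mathcal{G}$ satisfying $\mathscr{C}_\mathcal{G}=\mathscr{Q}_\mathcal{G}$. Then the vertex-encoding protocol with a perfect $d$-level quantum channel (for any $d$ for which it can be implemented) does not exhibit one-shot zero-error superadditivity; that is, $n\le \alpha(G(N_n))\, d$.
   Context: A discrete memoryless classical channel $N$ has finite input alphabet $\mathcal{X}$, finite output alphabet $\mathcal{Y}$ and conditional probabilities $P(y|x)$. Distinct inputs $x,x'$ are confusable if some output $y$ has $P(y|x)>0$ and $P(y|x')>0$; the confusability graph $G(N)$ has vertex set $\mathcal{X}$ and edges between distinct confusable inputs, and $\alpha(G(N))$ (its independence number) is the one-shot zero-error capacity of $N$. For each output $y$, the hyperedge $h_y=\{x: P(y|x)>0\}$. A perfect $d$-level quantum channel is the identity channel on states of $\mathbb{C}^d$, with one-shot zero-error capacity $d$. The vertex-encoding protocol with a perfect $d$-level quantum channel: one assigns to every input $v\in\mathcal{X}$ a unit vector $\ket{\psi_v}\in\mathbb{C}^d$ such that $\ket{\psi_v}\perp\ket{\psi_w}$ whenever $v,w$ are adjacent in $G(N)$ (an orthogonal representation of $G(N)$ in $\mathbb{C}^d$). Messages are identified with the $n=|\mathcal{X}|$ inputs; to send $v$, the sender inputs $v$ into $N$ and sends $\ket{\psi_v}$ through the perfect quantum channel; upon seeing output $y$, the receiver performs a projective measurement containing the projectors $\ket{\psi_w}\!\bra{\psi_w}$, $w\in h_y$ (completed to the identity),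 which identifies $v$ with certainty. The protocol thus transmits $n$ messages with zero error, and it is said to exhibit one-shot zero-error superadditivity if $n>\alpha(G(N))\cdot d$. Exclusivity graph framework: for a finite graph $\mathcal{G}$ with vertex set $V_\mathcal{G}$ and edge set $E_\mathcal{G}$, a behavior is a map $p:V_\mathcal{G}\to[0,1]$ with $p(v)+p(v')\le 1$ for all edges $\{v,v'\}$. It is classical if there is a probability space $(\Omega,\Sigma,\mu)$ and sets $A_v\in\Sigma$ with $A_v\cap A_{v'}=\varnothing$ for all edges $\{v,v'\}$ and $p(v)=\mu(A_v)$; $\mathscr{C}_\mathcal{G}$ is the set of classical behaviors. It is quantum if there are a Hilbert space $\mathcal{H}$, a density operator $\rho$ and projectors $\Pi_v$ with $\Pi_v\Pi_{v'}=0$ for all edges $\{v,v'\}$ and $p(v)=\mathrm{Tr}(\rho\Pi_v)$; $\mathscr{Q}_\mathcal{G}$ is the set of quantum behaviors. *)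

(* Defs.v *)
From HB Require Import structures.
From mathcomp Require Import all_boot all_order all_algebra.
From mathcomp Require Import all_classical all_reals all_analysis.
From mathcomp Require Import complex.

Set Implicit Arguments.
Unset Strict Implicit.
Unset Printing Implicit Defensive.

Import Order.TTheory GRing.Theory Num.Theory.
Local Open Scope ring_scope.

(* P x y = P(y|x): a stochastic matrix from inputs X to outputs Y. *)
Definition is_channel (R : realType) (X Y : finType) (P : X -> Y -> R) : Prop :=
  (forall x y, 0 <= P x y) /\ (forall x, \sum_(y : Y) P x y = 1).

Definition confusable (R : realType) (X Y : finType) (P : X -> Y -> R) : rel X :=
  fun x x' => (x != x') && [exists y : Y, (0 < P x y) && (0 < P x' y)].

Definition independent (T : finType) (e : rel T) (S : {set T}) : bool :=
  [forall x in S, forall y in S, ~~ e x y].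

Definition independence_number (T : finType) (e : rel T) : nat :=
  \max_(S : {set T} | independent e S) #|S|.

Definition graph_iso (T1 T2 : finType) (e1 : rel T1) (e2 : rel T2) : Prop :=
  exists f : T1 -> T2, bijective f /\ forall x y, e1 x y = e2 (f x) (f y).

Definition behavior (R : realType) (V : finType) (e : rel V) (p : V -> R) : Prop :=
  (forall v, 0 <= p v <= 1) /\ (forall v w, e v w -> p v + p w <= 1).

Definition classical_behavior (R : realType) (V : finType) (e : rel V)
    (p : V -> R) : Prop :=
  behavior e p /\
  exists (d : measure_display) (T : measurableType d) (mu : probability T R)
         (A : V -> set T),
    (forall v, measurable (A v)) /\
    (forall v w, e v w -> (A v `&` A w = set0)%classic) /\
    (forall v, mu (A v) = (p v)%:E).

Definition adjmx (R : realType) (m n : nat) (A : 'M[R[i]]_(m, n)) : 'M[R[i]]_(n, m) :=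
  map_mx Num.conj A^T.

Definition is_hermitian (R : realType) (m : nat) (A : 'M[R[i]]_m) : Prop :=
  adjmx A = A.

Definition is_density (R : realType) (m : nat) (rho : 'M[R[i]]_m) : Prop :=
  is_hermitian rho /\
  (forall u : 'cV[R[i]]_m, 0 <= (adjmx u *m rho *m u) 0 0) /\
  \tr rho = 1.

Definition is_projector (R : realType) (m : nat) (Pi : 'M[R[i]]_m) : Prop :=
  is_hermitian Pi /\ Pi *m Pi = Pi.

Definition quantum_behavior (R : realType) (V : finType) (e : rel V)
    (p : V -> R) : Prop :=
  behavior e p /\
  exists (m : nat) (rho : 'M[R[i]]_m) (Pi : V -> 'M[R[i]]_m),
    is_density rho /\
    (forall v, is_projector (Pi v)) /\
    (forall v w, e v w -> Pi v *m Pi w = 0) /\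
    (forall v, \tr (rho *m Pi v) = ((p v)%:C)%C).

Definition classical_eq_quantum (R : realType) (V : finType) (e : rel V) : Prop :=
  forall p : V -> R, classical_behavior e p <-> quantum_behavior e p.

(* orthogonal representation of (X, e) by unit vectors of C^d:
   exactly the data needed to implement the vertex-encoding protocol
   with a perfect d-level quantum channel *)
Definition orthogonal_representation (R : realType) (X : finType) (e : rel X)
    (d : nat) (psi : X -> 'cV[R[i]]_d) : Prop :=
  (forall v, (adjmx (psi v) *m psi v) 0 0 = 1) /\
  (forall v w, e v w -> (adjmx (psi v) *m psi w) 0 0 = 0).

(* Main.v *)
Require Import Defs.
From HB Require Import structures.
From mathcomp Require Import all_boot all_order all_algebra.
From mathcomp Require Import all_classical all_reals all_analysis.
From mathcomp Require Import complex measurable_realfun.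
Set Implicit Arguments. Unset Strict Implicit. Unset Printing Implicit Defensive.
Import Order.TTheory GRing.Theory Num.Theory.
Local Open Scope ring_scope.
Section LA.
Variable R : realType.
Local Notation C := R[i].

Lemma adjmxK m n (A : 'M[C]_(m, n)) : adjmx (adjmx A) = A.
Proof. by apply/matrixP=> i j; rewrite !mxE conjCK. Qed.

Lemma adjmxM m n p (A : 'M[C]_(m, n)) (B : 'M[C]_(n, p)) :
  adjmx (A *m B) = adjmx B *m adjmx A.
Proof.
apply/matrixP=> i j; rewrite !mxE rmorph_sum; apply: eq_bigr => k _.
by rewrite !mxE rmorphM mulrC.
Qed.

Lemma adjmx_scalar n (c : C) : Num.conj c = c -> adjmx (c%:M : 'M[C]_n) = c%:M.
Proof.
move=> cc; apply/matrixP=> i j; rewrite !mxE eq_sym.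
by case: (i == j); rewrite /= ?mulr1n ?mulr0n ?cc ?conjC0.
Qed.

Lemma unit_inner d (psi : 'cV[C]_d) : (adjmx psi *m psi) 0 0 = 1 ->
  adjmx psi *m psi = 1%:M.
Proof. by move=> h; apply/matrixP=> i j; rewrite !ord1 h mxE. Qed.

Lemma proj_of d (psi : 'cV[C]_d) : (adjmx psi *m psi) 0 0 = 1 ->
  is_projector (psi *m adjmx psi).
Proof.
move=> h; split; first by rewrite /is_hermitian adjmxM adjmxK.
by rewrite mulmxA -(mulmxA psi) unit_inner // mulmx1.
Qed.

Lemma tr_proj d (psi : 'cV[C]_d) : (adjmx psi *m psi) 0 0 = 1 ->
  \tr (psi *m adjmx psi) = 1.
Proof. by move=> h; rewrite mxtrace_mulC unit_inner // mxtrace1. Qed.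

Lemma inner_ge0 d (u : 'cV[C]_d) : 0 <= (adjmx u *m u) 0 0.
Proof.
rewrite mxE; apply: sumr_ge0 => k _; rewrite !mxE mulrC; exact: mul_conjC_ge0.
Qed.
End LA.

Lemma density_scalar (R : realType) (d : nat) : (0 < d)%N ->
  is_density (((d%:R : R)^-1)%:C%C%:M : 'M[R[i]]_d).
Proof.
move=> d0; set c := ((d%:R : R)^-1)%:C%C.
have c0 : 0 <= c by rewrite ler0c invr_ge0 ler0n.
have cc : Num.conj c = c by apply/eqP; rewrite -CrealE ger0_real.
split; first exact: adjmx_scalar.
split.
  move=> u; rewrite mul_mx_scalar -scalemxAl mxE; apply: mulr_ge0 => //.
  exact: inner_ge0.
rewrite mxtrace_scalar /c fmorphV rmorph_nat -[_^-1]mulr1 -mulrnAr mulVf //.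
by rewrite pnatr_eq0 -lt0n.
Qed.

Lemma count_bound (R : realType) (X : finType) (conf : rel X)
  (dd : measure_display) (T : measurableType dd) (mu : probability T R)
  (B : X -> set T) (c : R) :
  (forall u, measurable (B u)) ->
  (forall u w, conf u w -> (B u `&` B w = set0)%classic) ->
  (forall u, mu (B u) = c%:E) ->
  #|X|%:R * c <= (independence_number conf)%:R.
Proof.
move=> mB dB muB.
pose F := fun x : T => (\sum_(u <- enum X) (\1_(B u) x : R)%:E)%E.
have mF : forall u, measurable_fun setT (EFin \o (\1_(B u) : T -> R)).
  by move=> u; apply/measurableT_comp => //; exact: measurable_indic.
have I1 : (\int[mu]_(x in setT) F x = (#|X|%:R * c)%:E)%E.
  rewrite /F ge0_integral_sum //.
  under eq_bigr do rewrite integral_indic // setIT.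
  rewrite (eq_bigr (fun=> c%:E)); last by move=> u _; exact: muB.
  by rewrite sumEFin big_const_seq count_predT -cardE iter_addr_0 mulr_natl.
have Fle : forall x, (F x <= (independence_number conf)%:R%:E)%E.
  move=> x; rewrite /F sumEFin lee_fin.
  set S := [set u : X | x \in B u].
  have -> : \sum_(u <- enum X) (\1_(B u) x : R) = #|S|%:R.
    rewrite big_enum /= (bigID (fun u => u \in S)) /= addrC big1; last first.
      by move=> u; rewrite inE indicE => /negbTE ->.
    rewrite add0r (eq_bigr (fun _ => 1)); last by move=> u; rewrite inE indicE => ->.
    by rewrite sumr_const.
  rewrite ler_nat; apply: leq_bigmax_cond.
  apply/forallP => u; apply/implyP => uS; apply/forallP => w; apply/implyP => wS.
  apply/negP => cuw; have := dB _ _ cuw; rewrite -subset0 => /(_ x); apply.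
  by move: uS wS; rewrite !inE.
have : (\int[mu]_(x in setT) F x <= \int[mu]_(x in setT) (cst ((independence_number conf)%:R%:E)) x)%E.
  apply: ge0_le_integral => //.
  - by move=> x _; apply: sume_ge0 => u _; rewrite lee_fin.
  - exact: emeasurable_sum.
rewrite I1 integral_cst // [X in (_ * X)%E](_ : _ = 1%E) ?mule1 ?lee_fin //; exact: probability_setT.
Qed.

Theorem theorem2 (R : realType) (X Y : finType) (P : X -> Y -> R)
    (V : finType) (e : rel V) :
  is_channel P ->
  graph_iso (confusable P) e ->
  classical_eq_quantum R e ->
  forall (d : nat) (psi : X -> 'cV[R[i]]_d),
    orthogonal_representation (confusable P) psi ->
    (#|X| <= independence_number (confusable P) * d)%N.
Proof.
move=> chP [f [fbij fE]] CQ d psi [psiN psiO].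
have [g fK gK] := fbij.
have eE : forall v w, e v w = confusable P (g v) (g w) by move=> v w; rewrite fE !gK.
case: (posnP #|X|) => [-> //|Xpos].
have /card_gt0P [x0 _] := Xpos.
have dpos : (0 < d)%N.
  case: d psi psiN {psiO} => // psi psiN; have := psiN x0.
  by rewrite mxE big_ord0 => /eqP; rewrite eq_sym oner_eq0.
case: (ltnP 1 d) => [d2 | d1].
  pose cR : R := (d%:R)^-1.
  have Q : quantum_behavior e (fun _ => cR).
    split.
      split => [v|v w _].
        by rewrite invr_ge0 ler0n /= invf_le1 ?ltr0n // ler1n.
      rewrite -mulr2n -mulr_natl ler_pdivrMr ?ltr0n // mul1r ler_nat //.
    exists d, ((cR%:C)%C%:M), (fun v => psi (g v) *m adjmx (psi (g v))).
    split; first exact: density_scalar.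
    split; first by move=> v; apply: proj_of.
    split.
      move=> v w evw.
      have h0 : adjmx (psi (g v)) *m psi (g w) = 0.
        by apply/matrixP => i j; rewrite !ord1 psiO -?eE // mxE.
      by rewrite mulmxA -(mulmxA (psi _)) h0 mulmx0 mul0mx.
    by move=> v; rewrite mul_scalar_mx mxtraceZ tr_proj // mulr1.
  have [_ [dd [T [mu [A [Am [Ad Amu]]]]]]] := (CQ _).2 Q.
  have := @count_bound R X (confusable P) dd T mu (fun u => A (f u)) cR.
  move=> /(_ (fun u => Am _)) /(_ _) /(_ (fun u => Amu _)).
  have H : forall u w, confusable P u w -> (A (f u) `&` A (f w) = set0)%classic.
    by move=> u w cuw; apply: Ad; rewrite -fE.
  move=> /(_ H).
  by rewrite ler_pdivrMr ?ltr0n // -natrM ler_nat.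
have d1' : d = 1%N by apply/eqP; rewrite eqn_leq d1 dpos.
subst d.
have noedge : forall u w, ~~ confusable P u w.
  move=> u w; apply/negP => cuw; have := psiO _ _ cuw; have := psiN u; have := psiN w.
  rewrite !mxE !big_ord1 !mxE => hw hu.
  move/eqP; rewrite mulf_eq0 conjC_eq0 => /orP [] /eqP h0.
    by move: hu; rewrite h0 conjC0 mul0r => /eqP; rewrite eq_sym oner_eq0.
  by move: hw; rewrite h0 mulr0 => /eqP; rewrite eq_sym oner_eq0.
rewrite muln1 -cardsT; apply: leq_bigmax_cond.
apply/forallP => u; apply/implyP => _; apply/forallP => w; apply/implyP => _.
exact: noedge.
Qed.
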